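(* Let $i\in\mathbb{N}$ be fixed. Let $G\in\mathcal{G}_{k,n,p}$ and $v\neq w\in V(G)$, and let $X=X_0,X_1,\dots$ be a simple random walk on $G$. Then \[ \mathbb{P}[T_{wv}=i]=\mathbb{P}_w[X_i=v]\pm\mathcal{O}\!\left(\frac{1}{p^2n^2}\right). \]
   Context: Fix an integer $k\ge2$ and let $p=p(n)$ satisfy $\frac{\log n}{n^{(k-1)/k}}\le p\le 1-\Omega(\frac{\log^4 n}{n})$. $\mathcal{G}_{k,n,p}$ denotes the set of graphs $G$ on $n$ vertices satisfying: (i) $G$ is not bipartite; (ii) $\operatorname{diam}(G)\le k$; (iii) every vertex has degree $d(v)=pn\pm\mathcal{O}(\sqrt{pn\log n})$; (iv) $2|E(G)|=pn^2\pm\mathcal{O}(\sqrt{pn^2\log n})$; (v) $|N(v)\cap N(w)|=p^2n\pm\mathcal{O}(\max\{\sqrt{p^2n\log n},\log n\})$ for all $v\ne w$; (vi) the unit eigenvector $\phi$ of the largest adjacency eigenvalue has entries $\phi_i=\frac1{\sqrt n}\pm\mathcal{O}(\frac{\log^{3/2}n}{\sqrt p\,n\log(pn)})$; (vii) $\lambda_1=(1+o(1))pn$; (viii) $\max\{|\lambda_2|,|\lambda_n|\}=\mathcal{O}(\sqrt{pn})$, where $\lambda_1\ge\dots\ge\lambda_n$ are the adjacency eigenvalues. Asymptotic notation is as $n\to\infty$ with constants independent of $n$. $\mathbb{P}_w[\cdot]=\mathbb{P}[\cdot\mid X_0=w]$, and $T_{wv}$ is the first time the walk started at $w$ hits $v$.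 *)

(* Defs.v *)
From HB Require Import structures.
From mathcomp Require Import all_boot all_order all_algebra.
From mathcomp Require Import all_classical all_reals all_analysis.
Set Implicit Arguments. Unset Strict Implicit. Unset Printing Implicit Defensive.
Import Order.TTheory GRing.Theory Num.Theory.
Local Open Scope ring_scope.

Section Graphs.
Variable R : realType.
Variable n : nat.

Definition simple_graph (e : rel 'I_n) : Prop :=
  (forall x y, e x y = e y x) /\ (forall x, ~~ e x x).

Definition deg (e : rel 'I_n) (v : 'I_n) : nat := #|[set u | e v u]|.

Definition edges (e : rel 'I_n) : {set {set 'I_n}} :=
  [set S : {set 'I_n} | [exists x, exists y, e x y && (S == [set x; y])]].

Definition codeg (e : rel 'I_n) (v w : 'I_n) : nat := #|[set u | e v u && e w u]|.

Definition bipartite (e : rel 'I_n) : Prop :=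
  exists f : 'I_n -> bool, forall x y, e x y -> f x != f y.

Definition diam_le (e : rel 'I_n) (k : nat) : Prop :=
  forall x y : 'I_n, exists s : seq 'I_n,
    [/\ path e x s, last x s = y & (size s <= k)%N].

Definition adj (e : rel 'I_n) : 'M[R]_n := \matrix_(x, y) (e x y)%:R.

(* lam is the nonincreasing list lambda_1 >= ... >= lambda_n (indexed from 0)
   of the adjacency eigenvalues with multiplicity: A = Q diag(lam) Q^T with Q
   orthogonal. *)
Definition adj_spectrum (e : rel 'I_n) (lam : nat -> R) : Prop :=
  (forall a b : nat, (a <= b)%N -> (b < n)%N -> lam b <= lam a) /\
  exists Q : 'M[R]_n, Q^T *m Q = 1%:M /\
    adj e = Q *m diag_mx (\row_(j < n) lam j) *m Q^T.

Definition srw (e : rel 'I_n) (x y : 'I_n) : R := (e x y)%:R / (deg e x)%:R.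

Definition path_prob (e : rel 'I_n) (i : nat) (x : {ffun 'I_i.+1 -> 'I_n}) : R :=
  \prod_(j < i) srw e (x (inord j)) (x (inord j.+1)).

Definition walk_at (e : rel 'I_n) (i : nat) (w v : 'I_n) : R :=
  \sum_(x : {ffun 'I_i.+1 -> 'I_n} | (x ord0 == w) && (x ord_max == v))
     path_prob e x.

Definition first_hit (e : rel 'I_n) (i : nat) (w v : 'I_n) : R :=
  \sum_(x : {ffun 'I_i.+1 -> 'I_n} | [&& x ord0 == w, x ord_max == v &
        [forall j : 'I_i, x (inord j) != v]])
     path_prob e x.

(* Membership in G_{k,n,p}; the constants hidden in the O(.) / o(1) are
   explicit parameters: c_deg, c_edge, c_codeg, c_phi, c_eig, and eps(n) -> 0
   for lambda_1 = (1 + o(1)) p n. *)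
Definition in_Gknp (k : nat) (p : R) (c_deg c_edge c_codeg c_phi c_eig : R)
    (eps : R) (e : rel 'I_n) : Prop :=
  let nR := n%:R in
  simple_graph e /\
  ~ bipartite e /\
  diam_le e k /\
  (forall v, `|(deg e v)%:R - p * nR| <= c_deg * Num.sqrt (p * nR * ln nR)) /\
  `|(2 * #|edges e|)%:R - p * nR ^+ 2| <= c_edge * Num.sqrt (p * nR ^+ 2 * ln nR) /\
  (forall v w, v != w -> `|(codeg e v w)%:R - p ^+ 2 * nR|
      <= c_codeg * Num.max (Num.sqrt (p ^+ 2 * nR * ln nR)) (ln nR)) /\
      exists lam : nat -> R, adj_spectrum e lam /\
        [/\ exists phi : 'cV[R]_n,
              [/\ adj e *m phi = lam 0%N *: phi,
                  \sum_j phi j ord0 ^+ 2 = 1 &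
                  forall j, `|phi j ord0 - 1 / Num.sqrt nR|
                     <= c_phi * (ln nR `^ (3%:R / 2%:R)
                                 / (Num.sqrt p * nR * ln (p * nR)))],
            `|lam 0%N - p * nR| <= `|eps| * (p * nR) &
            Num.max `|lam 1%N| `|lam n.-1| <= c_eig * Num.sqrt (p * nR)].

End Graphs.

(* Main.v *)
Require Import Defs.
From HB Require Import structures.
From mathcomp Require Import all_boot all_order all_algebra.
From mathcomp Require Import all_classical all_reals all_analysis.
From mathcomp Require Import zify lra.
Set Implicit Arguments. Unset Strict Implicit. Unset Printing Implicit Defensive.
Import Order.TTheory GRing.Theory Num.Theory.
Local Open Scope ring_scope.
Section PathSum.
Variable (R : realFieldType) (T : finType).

Definition snoc_ffun (i : nat) (x : {ffun 'I_i.+1 -> T}) (y : T) : {ffun 'I_i.+2 -> T} :=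
  [ffun t : 'I_i.+2 => if (t < i.+1)%N then x (inord t) else y].
Definition init_ffun (i : nat) (z : {ffun 'I_i.+2 -> T}) : {ffun 'I_i.+1 -> T} :=
  [ffun t : 'I_i.+1 => z (widen_ord (leqnSn _) t)].

Lemma snocK i : cancel (fun p : {ffun 'I_i.+1 -> T} * T => snoc_ffun p.1 p.2)
   (fun z => (init_ffun z, z ord_max)).
Proof.
case=> x y /=; congr pair; last by rewrite ffunE /= ltnn.
by apply/ffunP=> t; rewrite !ffunE /= ltn_ord; congr (x _); apply/val_inj; rewrite /= inordK.
Qed.

Lemma snocK' i : cancel (fun z => (init_ffun z, z ord_max))
  (fun p : {ffun 'I_i.+1 -> T} * T => snoc_ffun p.1 p.2).
Proof.
move=> z; apply/ffunP=> t; rewrite !ffunE /=.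
case: ifP=> ht.
  by congr (z _); apply/val_inj; rewrite /= inordK.
congr (z _); apply/val_inj=> /=; move: (ltn_ord t) ht; rewrite ltnS leq_eqVlt.
by case/orP=> [/eqP ->|-> //].
Qed.

Lemma snoc_val i x y (j : nat) : (j <= i)%N -> @snoc_ffun i x y (inord j) = x (inord j).
Proof. move=> hj; rewrite ffunE inordK; last by rewrite ltnS ltnW. by rewrite ltnS hj. Qed.

Lemma snoc_last i x y : @snoc_ffun i x y (inord i.+1) = y.
Proof. by rewrite ffunE inordK // ltnn. Qed.

Lemma sum_path_le (i : nat) (g : nat -> T -> T -> R) (b : nat -> R) (w : T) :
  (forall t u y, 0 <= g t u y) -> (forall t u, \sum_y g t u y <= b t) ->
  \sum_(x : {ffun 'I_i.+1 -> T} | x ord0 == w)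
      \prod_(j < i) g j (x (inord j)) (x (inord j.+1)) <= \prod_(j < i) b j.
Proof.
move=> g0 gb; elim: i => [|i IH].
  rewrite big_ord0 (big_pred1 [ffun=> w]) ?big_ord0 //.
  move=> x /=; apply/eqP/eqP=> [hx|->]; last by rewrite ffunE.
  by apply/ffunP=> t; rewrite ord1 ffunE.
have b0 : 0 <= b i by apply: le_trans (gb i w); apply: sumr_ge0.
rewrite (reindex (fun p : {ffun 'I_i.+1 -> T} * T => snoc_ffun p.1 p.2)); last first.
  by apply: onW_bij; exists (fun z => (init_ffun z, z ord_max)); [exact: snocK| exact: snocK'].
rewrite (eq_bigl (fun p : {ffun 'I_i.+1 -> T} * T => (p.1 ord0 == w) && xpredT p.2)); last first.
  case=> x y /=; rewrite andbT.
  have e1 : (ord0 : 'I_i.+2) = inord 0 by apply/val_inj; rewrite /= inordK.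
  have e2 : (ord0 : 'I_i.+1) = inord 0 by apply/val_inj; rewrite /= inordK.
  by rewrite e1 snoc_val // -e2.
rewrite -(pair_big_dep (fun x : {ffun 'I_i.+1 -> T} => x ord0 == w) (fun _ _ => true)
   (fun x y => \prod_(j < i.+1) g j (snoc_ffun x y (inord j)) (snoc_ffun x y (inord j.+1)))).
rewrite /= [X in _ <= X]big_ord_recr /=.
apply: le_trans (ler_wpM2r b0 IH); rewrite big_distrl /=; apply: ler_sum => x _.
under eq_bigr => y _ do rewrite big_ord_recr /= snoc_val // snoc_last.
have E : forall y, \prod_(j < i) g j (snoc_ffun x y (inord j)) (snoc_ffun x y (inord j.+1))
   = \prod_(j < i) g j (x (inord j)) (x (inord j.+1)).
  by move=> y; apply: eq_bigr => j _; rewrite !snoc_val // ltnW.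
under eq_bigr => y _ do rewrite E.
rewrite -big_distrr /=; apply: ler_wpM2l => //.
by apply: prodr_ge0 => j _.
Qed.
End PathSum.

Section Walk.
Variables (R : realType) (n : nat) (e : rel 'I_n) (d : R).
Hypothesis d0 : 0 < d.
Hypothesis degd : forall u, d <= (deg e u)%:R.

Lemma srw_ge0 u y : 0 <= srw R e u y.
Proof. by rewrite /srw divr_ge0. Qed.

Lemma pp_ge0 i (x : {ffun 'I_i.+1 -> 'I_n}) : 0 <= path_prob R e x.
Proof. by apply: prodr_ge0 => j _; apply: srw_ge0. Qed.

Lemma deg_gt0 u : 0 < (deg e u)%:R :> R.
Proof. exact: lt_le_trans d0 (degd u). Qed.

Lemma srw_sum u : \sum_y srw R e u y = 1.
Proof.
rewrite /srw -big_distrl /= -natr_sum.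
have -> : (\sum_y (e u y : nat))%N = deg e u.
  rewrite /deg -sum1_card [RHS]big_mkcond /=; apply: eq_bigr => y _.
  by rewrite inE; case: (e u y).
by rewrite divff // gt_eqF // deg_gt0.
Qed.

Lemma srw_le u y : srw R e u y <= 1 / d.
Proof.
rewrite /srw; apply: le_trans (_ : 1 / (deg e u)%:R <= _).
  by rewrite ler_pM2r ?invr_gt0 ?deg_gt0 // lern1 leq_b1.
by rewrite !div1r lef_pV2 ?posrE ?deg_gt0.
Qed.


Lemma walk_diff i w v : v != w ->
  `|first_hit R e i w v - walk_at R e i w v| <= i%:R / d ^+ 2.
Proof.
move=> vw.
set Q := fun x : {ffun 'I_i.+1 -> 'I_n} => [forall j : 'I_i, x (inord j) != v].
have -> : first_hit R e i w v = \sum_(x : {ffun 'I_i.+1 -> 'I_n} |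
   ((x ord0 == w) && (x ord_max == v)) && Q x) path_prob R e x.
  by apply: eq_bigl => x; rewrite andbA.
rewrite /walk_at [X in _ - X](bigID Q) /=.
rewrite opprD addrA subrr add0r normrN ger0_norm; last first.
  by apply: sumr_ge0 => x _; apply: pp_ge0.
apply: le_trans (_ : \sum_(x : {ffun 'I_i.+1 -> 'I_n} | x ord0 == w)
   \sum_(j < i) path_prob R e x * (x (inord j) == v)%:R * (x ord_max == v)%:R <= _).
  rewrite [X in X <= _]big_mkcond [X in _ <= X]big_mkcond /=; apply: ler_sum => x _.
  case: (x ord0 == w) => /=; last by [].
  case hm: (x ord_max == v) => /=; last first.
    by apply: sumr_ge0 => j _; rewrite mulr0.
  case: ifP => hq; last first.
    by apply: sumr_ge0 => j _; rewrite mulr1 mulr_ge0 // pp_ge0.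
  move/forallPn: hq => [j]; rewrite negbK => hj.
  rewrite (bigD1 j) //= hj mulr1 mulr1 lerDl.
  by apply: sumr_ge0 => j' _; rewrite mulr1 mulr_ge0 // pp_ge0.
rewrite exchange_big /=.
apply: le_trans (_ : \sum_(j < i) (1 / d) ^+ 2 <= _); last first.
  by rewrite sumr_const card_ord expr_div_n expr1n mul1r mulr_natl.
apply: ler_sum => j _.
have [j0|jpos] := posnP j.
  rewrite big1 ?sqr_ge0 // => x /eqP hx.
  have -> : (inord j : 'I_i.+1) = ord0 by apply/val_inj; rewrite /= j0 inordK.
  by rewrite hx eq_sym (negbTE vw) mulr0 mul0r.
set jj := nat_of_ord j.
set cond := fun t : nat => (t.+1 == jj) || (t.+1 == i).
pose g := fun (t : nat) (u y : 'I_n) => srw R e u y * (if cond t then (y == v)%:R else 1).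
pose b := fun t : nat => if cond t then 1 / d else 1.
have g0 : forall t u y, 0 <= g t u y.
  by move=> t u y; rewrite /g mulr_ge0 ?srw_ge0 //; case: ifP.
apply: le_trans (_ : \sum_(x : {ffun 'I_i.+1 -> 'I_n} | x ord0 == w)
   \prod_(t < i) g t (x (inord t)) (x (inord t.+1)) <= _).
  apply: ler_sum => x _.
  case hv: (x (inord jj) == v); case hm: (x ord_max == v);
    rewrite ?mulr0 ?mul0r ?mulr1; try by apply: prodr_ge0 => t _.
  apply: ler_prod => t _; rewrite srw_ge0 /= /g.
  case: ifP => hc; last by rewrite mulr1.
  case/orP: hc => /eqP ht.
    by rewrite ht hv mulr1.
  have -> : (inord t.+1 : 'I_i.+1) = ord_max by apply/val_inj; rewrite /= ht inordK.
  by rewrite hm mulr1.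
have Hs : forall t u, \sum_y g t u y <= b t.
  move=> t u; rewrite /g /b; case: ifP => _.
    rewrite (bigD1 v) //= eqxx mulr1 big1 ?addr0; first exact: srw_le.
    by move=> y /negbTE ->; rewrite mulr0.
  by under eq_bigr do rewrite mulr1; rewrite srw_sum.
apply: le_trans (@sum_path_le R _ i g b w g0 Hs) _.
have ij : (jj < i)%N := ltn_ord j.
have h0 : (jj.-1 < i)%N by lia.
have h1 : (i.-1 < i)%N by lia.
rewrite (bigD1 (Ordinal h0)) // (bigD1 (Ordinal h1)) /=; last first.
  by rewrite -val_eqE /=; lia.
rewrite big1 ?mulr1 ?expr2.
  by rewrite /b /cond /= ifT ?ifT //; apply/orP; [right|left]; lia.
move=> t /andP [ht1 ht0]; move: ht1 ht0; rewrite -!val_eqE /= => ht1 ht0.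
by rewrite /b /cond ifF //; apply/negbTE/norP; split; lia.
Qed.

End Walk.

Lemma asym (R : realType) (k : nat) (p : nat -> R) (c : R) n0 :
 (2 <= k)%N ->
 (forall n, (n0 <= n)%N -> ln (n%:R : R) / n%:R `^ (k.-1%:R / k%:R) <= p n) ->
 exists N, forall n, (N <= n)%N -> 0 < p n * n%:R /\
   c * Num.sqrt (p n * n%:R * ln (n%:R : R)) <= p n * n%:R / 2.
Proof.
move=> hk hp; set M := 4 * c ^+ 2 + 1.
have M0 : 0 < M by rewrite /M; have := sqr_ge0 c; lra.
exists (maxn (maxn n0 2) (Num.trunc (M ^+ k)).+1) => n hn.
have hn0 : (n0 <= n)%N by move: hn; rewrite !geq_max => /andP [/andP [] ].
have hn2 : (2 <= n)%N by move: hn; rewrite !geq_max => /andP [/andP [] ].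
have hnM : M ^+ k < n%:R.
  apply: lt_le_trans (truncnS_gt _) _; rewrite ler_nat.
  by move: hn; rewrite !geq_max => /andP [].
have := hp n hn0; set x := (n%:R : R) => hpx.
have x1 : 1 < x by rewrite /x (_ : 1 = 1%:R) // ltr_nat.
have x0 : 0 < x by lra.
set L := ln x; have L0 : 0 < L by apply: ln_gt0.
have k0 : (k%:R : R) != 0 by rewrite pnatr_eq0; lia.
set a := (k.-1%:R / k%:R : R); set r := (k%:R^-1 : R).
have hxa : x = x `^ a * x `^ r.
  rewrite -powRD; last by apply/implyP => _; rewrite gt_eqF.
  have ar : a + r = 1.
    rewrite /a /r -[X in _ + X]mul1r -mulrDl natr1 prednK ?mulfV //; lia.
  by rewrite ar powRr1 // ltW.
have hr : M <= x `^ r.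
  rewrite leNgt; apply/negP => h.
  have : (x `^ r) ^+ k < M ^+ k by rewrite ltrXn2r ?powR_ge0 //; lia.
  rewrite -powR_mulrn ?powR_ge0 // -powRrM /r mulVf // powRr1 ?ltW //.
  by move=> h'; have := lt_trans h' hnM; rewrite ltxx.
have pw0 : 0 < x `^ a by apply: powR_gt0.
have hpn : L * M <= p n * x.
  apply: le_trans (_ : L * x `^ r <= _).
    by rewrite ler_pM2l.
  apply: le_trans (_ : L / x `^ a * x <= _); last first.
    by rewrite ler_pM2r.
  by rewrite [X in _ <= _ * X]hxa mulrA divfK ?gt_eqF.
set y := p n * x.
have y0 : 0 < y by apply: lt_le_trans hpn; apply: mulr_gt0.
split => //.
have [c0|c0] := leP c 0.
  apply: le_trans (_ : 0 <= _); last by lra.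
  by rewrite mulr_le0_ge0 // sqrtr_ge0.
have -> : c = Num.sqrt (c ^+ 2) by rewrite sqrtr_sqr ger0_norm // ltW.
have -> : y / 2 = Num.sqrt ((y / 2) ^+ 2) by rewrite sqrtr_sqr ger0_norm // divr_ge0 // ltW.
rewrite -sqrtrM ?sqr_ge0 // ler_sqrt ?sqr_ge0 //.
have hyL : 0 <= y - L * M by rewrite subr_ge0.
have h1 : 0 <= y * (y - L * M) by apply: mulr_ge0 => //; apply: ltW.
rewrite /M in h1; have h2 : 0 <= y * L by apply: mulr_ge0; apply: ltW.
nra.
Qed.


Theorem lemma5p4 (R : realType) (k i : nat) (p : nat -> R)
    (c_up c_deg c_edge c_codeg c_phi c_eig : R) (eps : nat -> R) :
  (2 <= k)%N ->
  0 < c_up ->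
  (forall d : R, 0 < d -> exists N : nat, forall n, (N <= n)%N -> `|eps n| <= d) ->
  (exists n0 : nat, forall n : nat, (n0 <= n)%N ->
     ln (n%:R : R) / (n%:R `^ (k.-1%:R / k%:R)) <= p n /\
     p n <= 1 - c_up * (ln (n%:R : R) ^+ 4 / n%:R)) ->
  exists C : R, exists N : nat, 0 < C /\
    forall n : nat, (N <= n)%N ->
    forall e : rel 'I_n,
      in_Gknp k (p n) c_deg c_edge c_codeg c_phi c_eig (eps n) e ->
      forall v w : 'I_n, v != w ->
        `|first_hit R e i w v - walk_at R e i w v|
          <= C / (p n ^+ 2 * (n%:R : R) ^+ 2).
Proof.
move=> hk hc heps [n0 hp].
have [N hN] := @asym R k p c_deg n0 hk (fun n hn => (hp n hn).1).
exists (4 * i%:R + 1), N; split.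
  have := ler0n R i; lra.
move=> n hn e [_ [_ [_ [hdeg _]]]] v w vw.
have [y0 hsq] := hN n hn.
set d := p n * n%:R / 2.
have d0 : 0 < d by rewrite /d; lra.
have degd : forall u, d <= (deg e u)%:R.
  move=> u; move: (hdeg u); rewrite ler_norml => /andP [h _].
  rewrite /d; lra.
apply: le_trans (walk_diff d0 degd i vw) _.
have P0 : 0 < p n ^+ 2 * (n%:R : R) ^+ 2 by rewrite -exprMn exprn_gt0.
have -> : d ^+ 2 = (p n ^+ 2 * (n%:R : R) ^+ 2) / 4.
  have h4 : (2:R) ^+ 2 = 4 by rewrite expr2; lra.
  by rewrite /d expr_div_n exprMn h4.
rewrite invf_div mulrA ler_pM2r ?invr_gt0 //; lra.
Qed.
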